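(* Let $q > 1$ be an integer. For all positive integers $n$ and $M$, $$|C(n,q,M)| \leq \left(\frac{q}{q-1}\right)^{n-1}q^{M-2^n+n+1}.$$
   Context: Fix the alphabet $\{x_0,\ldots,x_{q-1}\}$ of $q$ letters. A word $W$ is an instance of a word $V = y_0y_1\cdots y_{m-1}$ (each $y_i$ a letter) if $W = A_0A_1\cdots A_{m-1}$ with each $A_i$ a nonempty word and $A_i = A_j$ whenever $y_i = y_j$. The Zimin words are defined by $Z_0 := \varepsilon$ (the empty word) and $Z_{n+1} := Z_n z_n Z_n$ for distinct letters $z_0,z_1,\dots$. $C(n,q,M)$ denotes the set of words $W \in \{x_0,\ldots,x_{q-1}\}^M$ that are instances of $Z_n$. *)

(* Defs.v *)
From mathcomp Require Import all_boot all_order all_algebra.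
From Stdlib Require Import ClassicalEpsilon.
Set Implicit Arguments. Unset Strict Implicit. Unset Printing Implicit Defensive.

(* Zimin words over the pattern alphabet nat: letter z_i is encoded as i.
   Z_0 = [::], Z_{n+1} = Z_n ++ [:: n] ++ Z_n. *)
Fixpoint zimin (n : nat) : seq nat :=
  if n is m.+1 then zimin m ++ m :: zimin m else [::].

Definition is_instance (T : eqType) (W : seq T) (V : seq nat) : Prop :=
  exists A : seq (seq T),
    [/\ size A = size V,
        W = flatten A,
        (forall i, i < size A -> nth [::] A i != [::]) &
        (forall i j, i < size V -> j < size V ->
           nth 0%N V i = nth 0%N V j -> nth [::] A i = nth [::] A j)].

Definition pbool (P : Prop) : bool :=
  if excluded_middle_informative P then true else false.

Definition C (n q M : nat) : {set M.-tuple 'I_q} :=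
  [set W : M.-tuple 'I_q | pbool (is_instance (tval W) (zimin n))].

(* Main.v *)
Require Import Defs.
From mathcomp Require Import all_boot all_order all_algebra zify ring.
From Stdlib Require Import ClassicalEpsilon.

Fixpoint words (q : nat) (k : nat) : seq (seq 'I_q) :=
  if k is k'.+1 then [seq x :: w | x <- enum 'I_q, w <- words q k'] else [:: [::]].

Lemma ap_cons (S T R : Type) (f : S -> T -> R) x s t :
  [seq f a b | a <- x :: s, b <- t] = map (f x) t ++ [seq f a b | a <- s, b <- t].
Proof. by []. Qed.

Lemma count_ap (S T R : Type) (f : S -> T -> R) (p : pred R) s t :
  count p [seq f a b | a <- s, b <- t] = \sum_(a <- s) count (fun b => p (f a b)) t.
Proof.
elim: s => [|x s IH]; first by rewrite big_nil.
by rewrite ap_cons count_cat count_map big_cons IH.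
Qed.

Lemma sum_ap (S T R : Type) (f : S -> T -> R) (F : R -> nat) s t :
  \sum_(u <- [seq f a b | a <- s, b <- t]) F u = \sum_(a <- s) \sum_(b <- t) F (f a b).
Proof.
elim: s => [|x s IH]; first by rewrite !big_nil.
by rewrite ap_cons big_cat big_map big_cons IH.
Qed.

Lemma size_words q k : size (words q k) = q ^ k.
Proof.
elim: k => [|k IH] //=.
by rewrite size_allpairs size_enum_ord IH expnS.
Qed.

Lemma mem_words q k w : (w \in words q k) = (size w == k).
Proof.
elim: k w => [|k IH] [|x w] //=.
- apply/allpairsP; by case => -[a b] /= [_ _].
- apply/allpairsP/idP.
  + by case => -[a b] /= [_ Hb [_ ->]]; rewrite /= eqSS -IH.
  + by move=> H; exists (x, w); rewrite /= mem_enum IH.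
Qed.

Lemma uniq_words q k : uniq (words q k).
Proof.
elim: k => [|k IH] //=.
apply: allpairs_uniq => //; first exact: enum_uniq.
by move=> [a b] [c d] _ _ /= [-> ->].
Qed.

Lemma card_count q M (p : pred (seq 'I_q)) :
  #|[set W : M.-tuple 'I_q | p (tval W)]| = count p (words q M).
Proof.
rewrite cardsE cardE /enum_mem size_filter.
transitivity (count p (map val (Finite.enum (M.-tuple 'I_q)))).
  by rewrite count_map; apply: eq_count.
apply/permP/uniq_perm; first by rewrite map_inj_uniq -?enumT ?enum_uniq //; exact: val_inj.
  exact: uniq_words.
move=> w; rewrite mem_words; apply/mapP/idP.
  by case=> t _ ->; rewrite size_tuple.
by move=> H; exists (Tuple H); rewrite -?enumT ?mem_enum.
Qed.

Lemma pboolP (P : Prop) : pbool P = true <-> P.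
Proof. by rewrite /pbool; case: excluded_middle_informative. Qed.

Lemma size_zimin n : (size (zimin n)).+1 = 2 ^ n.
Proof.
elim: n => [|n IH] //=.
rewrite size_cat /= expnS; lia.
Qed.

Lemma size_flatten_ge (T : eqType) (A : seq (seq T)) :
  (forall i, i < size A -> nth [::] A i != [::]) -> size A <= size (flatten A).
Proof.
elim: A => [|a A IH] //= H.
rewrite size_cat.
have h0 := H 0 isT.
have h1 : size A <= size (flatten A) by apply: IH => i Hi; exact: (H i.+1).
have : 0 < size a by move: h0; case: (a).
lia.
Qed.

Lemma inst_size (T : eqType) (W : seq T) V : is_instance W V -> size V <= size W.
Proof.
case=> A [hs -> hne _]; rewrite -hs; exact: size_flatten_ge.
Qed.

Lemma inst_split (T : eqType) (W : seq T) n : is_instance W (zimin n.+1) ->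
  exists m, [/\ 2 * m < size W, is_instance (take m W) (zimin n) &
                drop (size W - m) W = take m W].
Proof.
case=> A [hs hW hne hc].
set s := size (zimin n).
have hV : zimin n.+1 = zimin n ++ n :: zimin n by [].
have hsA : size A = s + (s.+1) by rewrite hs hV size_cat.
have nthV1 : forall i, i < s -> nth 0 (zimin n.+1) i = nth 0 (zimin n) i.
  by move=> i hi; rewrite hV nth_cat hi.
have nthV2 : forall i, i < s -> nth 0 (zimin n.+1) (s.+1 + i) = nth 0 (zimin n) i.
  move=> i hi; rewrite hV nth_cat ifF; last by lia.
  by rewrite (_ : s.+1 + i - size (zimin n) = i.+1) //; rewrite /s; lia.
have hsdef : size (zimin n) = s by [].
clearbody s.
set A1 := take s A.
set x := nth [::] A s.
have hA : A = A1 ++ x :: drop s.+1 A.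
  by rewrite /A1 /x -drop_nth ?cat_take_drop //; lia.
have hsA1 : size A1 = s by rewrite /A1 size_take; case: ifP => //; lia.
have hA2 : drop s.+1 A = A1.
  apply: (@eq_from_nth _ [::]); first by rewrite size_drop hsA1; lia.
  move=> i; rewrite size_drop => hi.
  rewrite nth_drop /A1 nth_take; last by lia.
  apply: hc; try lia.
  rewrite nthV2; last by lia.
  by rewrite nthV1 //; lia.
have hx : x != [::] by apply: hne; lia.
set U := flatten A1.
have hW' : W = (U ++ x) ++ U.
  rewrite hW {1}hA hA2 flatten_cat /= -catA //.
exists (size U); split.
- rewrite hW' !size_cat; have : 0 < size x by case: (x) hx. lia.
- rewrite hW' -catA take_size_cat //.
  rewrite /is_instance hsdef; exists A1; split.
  + by [].
  + by [].
  + move=> i hi; rewrite /A1 nth_take; last by rewrite -hsA1.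
    by apply: hne; rewrite hsA1 in hi; lia.
  + move=> i j hi hj hij; rewrite /A1 !nth_take //.
    apply: hc; try lia.
    by rewrite !nthV1.
- rewrite hW'.
  have -> : size ((U ++ x) ++ U) - size U = size (U ++ x) by rewrite !size_cat; lia.
  by rewrite drop_size_cat // -catA take_size_cat.
Qed.

Lemma geo q s E L : 0 < q -> L <= E.+1 ->
  (q-1) * \sum_(0 <= m < L) (if s <= m then q^(E-m) else 0)
  + (if s <= L then q^(E.+1 - L) else q^(E.+1 - s)) = q^(E.+1 - s).
Proof.
move=> hq; elim: L => [|L IH] hL.
  rewrite big_nil muln0 add0n; case: s => //.
rewrite big_nat_recr //=.
have hLE : L <= E by lia.
have {}IH := IH (ltnW hL).
set S := \sum_(0 <= m < L) _ in IH *.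
case: (leqP s L) => hs.
- rewrite ifT // in IH; rewrite ifT; last by lia.
  rewrite -IH (_ : E.+1 - L = (E - L).+1) ?expnS; last by lia.
  rewrite (_ : E.+1 - L.+1 = E - L); last by lia.
  set X := q ^ (E - L).
  rewrite mulnDr -addnA; congr (_ + _).
  by rewrite -{2}(mul1n X) -mulnDl subnK.
- rewrite ifF in IH; last by lia.
  rewrite addn0 -IH; congr (_ + _).
  case: ifP => h //.
  by have -> : s = L.+1 by lia.
Qed.

Definition P (q n : nat) : pred (seq 'I_q) := fun s => pbool (is_instance s (zimin n)).
Definition cnt q n M := count (P q n) (words q M).

Lemma count_split q a b (p : pred (seq 'I_q)) :
  count p (words q (a + b)) = \sum_(u <- words q a) count (fun v => p (u ++ v)) (words q b).
Proof.
elim: a p => [|a IH] p.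
  by rewrite add0n big_cons big_nil addn0.
rewrite addSn /= count_ap sum_ap.
apply: eq_bigr => x _.
exact: (IH (fun w => p (x :: w))).
Qed.

Lemma cnt_zero q n m : m < size (zimin n) -> cnt q n m = 0.
Proof.
move=> hm; rewrite /cnt; apply/eqP; rewrite -leqn0 leqNgt -has_count.
apply/hasPn => w; rewrite mem_words => /eqP hw; apply/negP => /pboolP /inst_size.
lia.
Qed.

Lemma has_sum (r : seq nat) (p : pred nat) : has p r -> 0 < \sum_(i <- r) p i.
Proof.
elim: r => [|x r IH] //=; rewrite big_cons; case: (p x) => //= /IH; lia.
Qed.

Lemma count_le_sum (T : eqType) (a : pred T) (b : nat -> pred T) (r : seq nat) l :
  (forall x, x \in l -> a x -> has (fun m => b m x) r) ->
  count a l <= \sum_(m <- r) count (b m) l.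
Proof.
elim: l => [|x l IH] H.
  by rewrite big1.
rewrite /= (eq_bigr (fun m => b m x + count (b m) l)) // big_split /=.
apply: leq_add.
  case hx: (a x) => //=; apply: has_sum; apply: H => //; exact: mem_head.
by apply: IH => y hy; apply: H; rewrite inE hy orbT.
Qed.

Lemma sum_const_seq (T : Type) (s : seq T) c : \sum_(x <- s) c = size s * c.
Proof. by elim: s => [|x s IH]; rewrite ?big_nil ?big_cons ?IH //= mulSn. Qed.

Lemma count_le_b q (l : seq (seq 'I_q)) (b : bool) u :
  uniq l -> count (fun y => b && (y == u)) l <= b.
Proof.
case: b => hl /=.
  by rewrite (count_uniq_mem u hl); case: (u \in l).
by rewrite count_pred0.
Qed.

Definition Qp q n M m : pred (seq 'I_q) := fun s =>
  [&& 2 * m < M, P q n (take m s) & drop (M - m) s == take m s].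

Lemma count_Q q n M m :
  count (Qp q n M m) (words q M) <= (if 2 * m < M then cnt q n m * q ^ (M - 2 * m) else 0).
Proof.
case: ifP => h; last first.
  by rewrite leqn0; apply/eqP; rewrite -(count_pred0 (words q M)); apply: eq_count => s; rewrite /Qp h.
set k := M - 2 * m.
have hM : M = m + (k + m) by rewrite /k; lia.
have -> : words q M = words q (m + (k + m)) by rewrite -hM.
rewrite count_split /cnt -sumn_count sumnE big_map big_distrl /=.
rewrite !big_seq; apply: leq_sum => u hu.
rewrite count_split.
have hsu : size u = m by move: hu; rewrite mem_words => /eqP.
apply: (@leq_trans (\sum_(x <- words q k) P q n u)).
  rewrite !big_seq; apply: leq_sum => x hx.
  have hsx : size x = k by move: hx; rewrite mem_words => /eqP.
  rewrite (@eq_in_count _ _ (fun y => P q n u && (y == u))).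
    exact: count_le_b (uniq_words q m).
  move=> y hy /=; rewrite /Qp h /= take_size_cat //.
  have hsz : size (u ++ x) = M - m by rewrite size_cat hsu hsx /k; lia.
  by rewrite catA drop_size_cat.
by rewrite sum_const_seq size_words mulnC.
Qed.

Lemma step q n M :
  cnt q n.+1 M <= \sum_(0 <= m < M) (if 2 * m < M then cnt q n m * q ^ (M - 2 * m) else 0).
Proof.
have H1 : cnt q n.+1 M <= \sum_(0 <= m < M) count (Qp q n M m) (words q M).
  apply: count_le_sum => x hx /pboolP /inst_split [m [h1 h2 h3]].
  have hsx : size x = M by move: hx; rewrite mem_words => /eqP.
  apply/hasP; exists m.
    rewrite mem_index_iota; lia.
  by rewrite /Qp -hsx h1 /= h3 eqxx andbT; apply/pboolP.
apply: leq_trans H1 _; apply: leq_sum => m _; exact: count_Q.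
Qed.

Lemma main_nat q n M : 1 < q ->
  cnt q n.+1 M * ((q-1)^n * q^(size (zimin n.+1))) <= q^(M + 2 * n.+1 - 1).
Proof.
move=> hq; elim: n M => [|n IH] M.
  have hc : cnt q 1 M <= q ^ M by rewrite /cnt -(size_words q M) count_size.
  rewrite expn0 mul1n /= expn1 (_ : M + 2 * 1 - 1 = M.+1); last by lia.
  by rewrite expnSr leq_mul2r hc orbT.
set s := size (zimin n.+1).
have hz : size (zimin n.+2) = s + s.+1 by rewrite [zimin n.+2]/= size_cat.
rewrite hz.
set K := (q-1)^n.+1 * q^(s + s.+1).
apply: leq_trans (leq_mul (step q n.+1 M) (leqnn K)) _.
rewrite big_distrl /=.
apply: (@leq_trans (\sum_(0 <= m < M) ((q-1) * q^(2 * n.+1 + s)) * (if s <= m then q^(M-m) else 0))).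
  rewrite !big_seq; apply: leq_sum => m hm.
  case: ifP => h2; last by rewrite mul0n.
  case: (leqP s m) => hs; last by rewrite cnt_zero // !mul0n.
  have E1 : q^(M - 2 * m) * q^(s.+1) * q^(m + 2 * n.+1 - 1) = q^(2 * n.+1 + s) * q^(M - m).
    by rewrite -!expnD; congr (q ^ _); lia.
  rewrite /K [(q-1)^n.+1]expnS [q^(s + s.+1)]expnD.
  set c := cnt q n.+1 m.
  have -> : c * q ^ (M - 2 * m) * ((q - 1) * (q - 1) ^ n * (q ^ s * q ^ s.+1))
     = (c * ((q-1)^n * q^s)) * ((q-1) * q ^ (M - 2 * m) * q ^ s.+1) by ring.
  apply: leq_trans (leq_mul (IH m) (leqnn _)) _.
  apply/eq_leq; rewrite -[RHS]mulnA -E1; ring.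
rewrite -big_distrr /=.
set S := \sum_(0 <= m < M) _.
have G := @geo q s M M (ltnW hq) (leqnSn M).
have hG : (q-1) * S * q^s <= q^(M.+1).
  case: (leqP s M) => hs.
    rewrite ifT // in G.
    have h : (q-1) * S <= q^(M.+1 - s) by rewrite -G leq_addr.
    apply: leq_trans (leq_mul h (leqnn _)) _.
    by rewrite -expnD subnK //; lia.
  rewrite ifF in G; last by lia.
  have -> : (q-1) * S = 0 by lia.
  by rewrite mul0n.
rewrite expnD.
have -> : (q - 1) * (q ^ (2 * n.+1) * q ^ s) * S = q ^ (2 * n.+1) * ((q-1) * S * q^s) by ring.
apply: leq_trans (leq_mul (leqnn _) hG) _.
by rewrite -expnD; apply/eq_leq; congr (q ^ _); lia.
Qed.
Import Order.TTheory GRing.Theory Num.Theory.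
Local Open Scope ring_scope.
Theorem mainTheorem5 (q : nat) (hq : (1 < q)%N) (n M : nat)
  (hn : (0 < n)%N) (hM : (0 < M)%N) :
  (#|C n q M|%:R : rat) <=
    ((q%:R / (q%:R - 1)) ^+ n.-1) *
    (q%:R : rat) ^ (M%:Z - (2 ^ n)%N%:Z + n%:Z + 1).
Proof.
have hC : #|C n q M| = cnt q n M by exact: card_count.
case: n hn hC => [|n] // _ hC.
have hmain := @main_nat q n M hq.
have hs := size_zimin n.+1.
set s := size (zimin n.+1) in hmain hs.
set N := #|C n.+1 q M| in hC *.
rewrite -hC in hmain.
have hnat : (N * ((q-1)^n * q^(2 ^ n.+1)) <= q^n * q^(M + n.+1 + 1))%N.
  rewrite -hs expnS.
  have -> : (N * ((q - 1) ^ n * (q * q ^ s)) = (N * ((q - 1) ^ n * q ^ s)) * q)%N by ring.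
  rewrite (_ : (q ^ n * q ^ (M + n.+1 + 1))%N = (q ^ (M + 2 * n.+1 - 1) * q)%N); last first.
    by rewrite -expnSr -expnD; congr (expn q _); lia.
  by rewrite leq_mul2r hmain orbT.
have hQ : (q%:R : rat) != 0 by rewrite pnatr_eq0; lia.
have hQ1 : (0 : rat) < q%:R - 1 by rewrite subr_gt0 ltr1n.
have -> : (M%:Z - (2 ^ n.+1)%N%:Z + n.+1%:Z + 1) = (M + n.+1 + 1)%N%:Z + (- (2 ^ n.+1)%N%:Z).
  by rewrite !PoszD; lia.
rewrite expfzDr // -exprnN /= expr_div_n mulf_div.
rewrite ler_pdivlMr; last by rewrite mulr_gt0 ?exprn_gt0 ?ltr0n ?expn_gt0 //; lia.
have -> : (q%:R : rat) - 1 = (q - 1)%N%:R by rewrite natrB //; lia.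
rewrite (_ : (q%:R : rat) ^ (M + n.+1 + 1)%N = q%:R ^+ (M + n.+1 + 1)) //.
rewrite -!natrX -!natrM ler_nat.
exact: hnat.
Qed.
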